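(* Let $n>1$ be an integer. There is no matrix $M\in\mathcal S^{n\times n}$ such that simultaneously: (A1) $M$ is distinguished and self-conjugate; (A2) the first row of $M$ is $[1,2,2,\dots,2]$; (A3) $c_i(M)=1$ for all $1\le i\le n$; (A4) every principal submatrix of $M$ of odd degree has a column whose sum of entries equals $1$.
   Context: $\mathcal S=\{0,1,2,3\}$ is the Klein four-group ($\mathbb Z_2$-vector space) with $x+x=0$, $1+2=3$, $1+3=2$, $2+3=1$. Conjugation is the linear involution $\overline{\cdot}$ of $\mathcal S$ with $\bar0=0,\bar1=1,\bar2=3,\bar3=2$. A square matrix $M$ over $\mathcal S$ is self-conjugate if $M^t=\overline M$ (entrywise conjugate), and distinguished if it has $1$ on the diagonal and $2$ or $3$ everywhere off the diagonal. $c_i(M)$ is the sum of the entries of the $i$-th column. A principal submatrix is one given by the same set of row and column indices. *)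

(* Defs.v *)
From HB Require Import structures.
From mathcomp Require Import all_boot all_algebra.
Set Implicit Arguments. Unset Strict Implicit. Unset Printing Implicit Defensive.

(* The Klein four-group S = {0,1,2,3} with x+x=0, 1+2=3, 1+3=2, 2+3=1. *)
Inductive S := S0 | S1 | S2 | S3.

Definition S_to_nat (x : S) : nat :=
  match x with S0 => 0 | S1 => 1 | S2 => 2 | S3 => 3 end.
Definition S_of_nat (n : nat) : S :=
  match n with 0 => S0 | 1 => S1 | 2 => S2 | _ => S3 end.
Lemma S_to_natK : cancel S_to_nat S_of_nat. Proof. by case. Qed.
HB.instance Definition _ := Equality.copy S (can_type S_to_natK).

Definition sadd (x y : S) : S :=
  match x, y with
  | S0, z | z, S0 => z
  | S1, S1 | S2, S2 | S3, S3 => S0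
  | S1, S2 | S2, S1 => S3
  | S1, S3 | S3, S1 => S2
  | S2, S3 | S3, S2 => S1
  end.

Definition sconj (x : S) : S :=
  match x with S0 => S0 | S1 => S1 | S2 => S3 | S3 => S2 end.

Definition self_conjugate n (M : 'M[S]_n) : Prop :=
  forall i j, M j i = sconj (M i j).

Definition distinguished n (M : 'M[S]_n) : Prop :=
  forall i j, if i == j then M i j = S1 else (M i j = S2 \/ M i j = S3).

(* sum of the entries of column j of the principal submatrix indexed by A *)
Definition colsum_in n (M : 'M[S]_n) (A : {set 'I_n}) (j : 'I_n) : S :=
  \big[sadd/S0]_(i in A) M i j.

Definition colsum n (M : 'M[S]_n) (j : 'I_n) : S := colsum_in M setT j.

(* Main.v *)
Require Import Defs.
From mathcomp Require Import all_boot all_algebra.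

Definition gS (x : S) : bool := (x == S1) || (x == S2).

Lemma gS_sadd x y : gS (sadd x y) = gS x (+) gS y.
Proof. by case: x; case: y. Qed.

Lemma gS_big n (M : 'M[S]_n) A j :
  gS (colsum_in M A j) = \big[addb/false]_(i in A) gS (M i j).
Proof. rewrite /colsum_in. apply: (big_morph gS gS_sadd); done. Qed.

Lemma addb_big (I : finType) (P : pred I) (b : I -> bool) :
  \big[addb/false]_(i | P i) b i = odd #|[set i | P i && b i]|.
Proof.
have := @big_morph _ _ odd false addb 0 addn oddD (erefl (odd 0)) I (index_enum I) P
  (fun i => nat_of_bool (b i)).
rewrite (eq_bigr (fun i => b i)); last by move=> i _; rewrite oddb.
move=> <-; congr odd.
rewrite (eq_bigr (fun i => if b i then 1 else 0)); last by move=> i _; case: (b i).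
by rewrite -big_mkcondr sum1_card cardsE.
Qed.

Theorem mainTheorem4 (n : nat) : 1 < n ->
  ~ exists M : 'M[S]_n,
      [/\ distinguished M /\ self_conjugate M,
          (forall i j : 'I_n, val i = 0 -> M i j = (if val j == 0 then S1 else S2)),
          (forall j : 'I_n, colsum M j = S1)
        & (forall A : {set 'I_n}, odd #|A| ->
             exists2 j, j \in A & colsum_in M A j = S1)].
Proof.
move=> n1 [M [[dist sc] row0 col odd3]].
have n0 : 0 < n by apply: ltnW.
pose z := Ordinal n0. pose o := Ordinal n1.
have Mdiag i : M i i = S1 by have := dist i i; rewrite eqxx.
have Moff i j : i != j -> M i j = S2 \/ M i j = S3.
  by move=> ne; have := dist i j; rewrite (negbTE ne).
have Mz j : j != z -> M z j = S2.
  move=> jz; rewrite row0 //; case: eqP => // h; case/eqP: jz.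
  by apply: val_inj.
pose D v := [set i | M i v == S2].
have Deven v : v != z -> ~~ odd #|D v|.
  move=> vz; have := col v; rewrite /colsum => /(congr1 gS).
  rewrite gS_big addb_big /=.
  have -> : [set i | (i \in setT) && gS (M i v)] = v |: D v.
    apply/setP=> i; rewrite !inE /=.
    case: (eqVneq i v) => [->|ne]; first by rewrite Mdiag.
    by rewrite /gS; case: (Moff i v ne) => ->.
  rewrite cardsU1 inE Mdiag /=.
  by case: (odd _).
have oz : o != z by [].
have [v vz vmin] := @arg_minnP _ o (fun x : 'I_n => x != z) (fun x => #|D x|) oz.
have zin : z \in D v by rewrite inE Mz.
have [u /andP[uD uz]] : exists u, (u \in D v) && (u != z).
  case: (pickP [pred u | (u \in D v) && (u != z)]) => [u Hu|H]; first by exists u.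
  exfalso.
  have E : D v = [set z].
    apply/setP=> i; rewrite inE; apply/idP/eqP => [iD|->//].
    by move: (H i) => /=; rewrite iD /= => /negbFE /eqP.
  by have := Deven v vz; rewrite E cards1.
have Muv : M u v = S2 by move: uD; rewrite inE => /eqP.
have uv : u != v by apply/eqP=> E; move: Muv; rewrite E Mdiag.
have uDu : u \notin D u by rewrite inE Mdiag.
have sub : u |: D u \subset D v.
  apply/subsetP=> w; rewrite in_setU1 => /predU1P [->//|wD].
  have Mwu : M w u = S2 by move: wD; rewrite inE => /eqP.
  rewrite inE; case: (eqVneq (M w v) S2) => // Hwv; exfalso.
  have wu : w != u by apply/eqP=> E; move: Mwu; rewrite E Mdiag.
  have wv : w != v.
    by apply/eqP=> E; move: Mwu; rewrite E sc Muv.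
  have Mwv : M w v = S3 by case: (Moff w v wv) => // h; rewrite h in Hwv.
  have Mvw : M v w = S2 by rewrite sc Mwv.
  have Muw : M u w = S3 by rewrite sc Mwu.
  have Mvu : M v u = S3 by rewrite sc Muv.
  have vw : v != w by rewrite eq_sym.
  have uvw : u \notin v |: [set w] by rewrite in_setU1 in_set1 negb_or uv eq_sym wu.
  have vnw : v \notin [set w] by rewrite in_set1.
  have c3 : odd #|u |: (v |: [set w])| by rewrite cardsU1 uvw cardsU1 vnw cards1.
  have [j jA] := odd3 _ c3.
  move/(congr1 gS); rewrite gS_big big_setU1 //= big_setU1 //= big_set1.
  move: jA; rewrite in_setU1 in_setU1 in_set1.
  by case/or3P => /eqP ->; rewrite ?Mdiag ?Muv ?Mvw ?Mwv ?Mvu ?Mwu ?Muw.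
have := subset_leq_card sub; rewrite cardsU1 uDu add1n.
have := vmin u uz; move=> h1 h2.
by have := leq_ltn_trans h1 h2; rewrite ltnn.
Qed.
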